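(* Let $\psi$ be the four-taxon network described in the context, with parameters $x,y>0$, $w=0$ and $\gamma\in[0,1]$, and one gene copy sampled per taxon. Under the multispecies network coalescent, as $x\to\infty$ the gene tree topology probabilities converge to: $P(((b,c),a),d)\to \gamma-(\gamma-\tfrac{\gamma^2}{3})e^{-y}$; $P(((b,c),d),a)\to (1-\gamma)-(\tfrac{2}{3}-\tfrac{\gamma}{3}-\tfrac{\gamma^2}{3})e^{-y}$; $P((a,b),(c,d))\to\gamma(1-\gamma)e^{-y}$ and $P((a,c),(b,d))\to\gamma(1-\gamma)e^{-y}$; $P(((a,b),c),d)\to\tfrac{\gamma^2}{3}e^{-y}$ and $P(((a,c),b),d)\to\tfrac{\gamma^2}{3}e^{-y}$; $P(a,(b,(c,d)))\to\tfrac{(1-\gamma)^2}{3}e^{-y}$ and $P(((b,d),c),a)\to\tfrac{(1-\gamma)^2}{3}e^{-y}$; and each of the remaining seven rooted gene tree topologies on $\{a,b,c,d\}$, namely $((a,d),(b,c))$, $(((a,b),d),c)$, $(b,(a,(c,d)))$, $(((a,d),b),c)$, $(((b,d),a),c)$, $(((a,c),d),b)$, $(((a,d),c),b)$, has probability converging to $0$.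
   Context: The network $\psi$ on taxa $A,B,C,D$ (gene copies $a,b,c,d$): the root $r$ has two children $p$ and $q$, with edges $(r,p)$ and $(r,q)$ both of length $x$. Node $p$ has children the leaf $A$ and a reticulation node $h$; node $q$ has children the leaf $D$ and $h$. The reticulation edges $(p,h)$ and $(q,h)$ have length $w=0$ and inheritance probabilities $\gamma$ and $1-\gamma$ respectively. Node $h$ has a single child $m$ via an edge of length $y$, and $m$ has the two leaf children $B$ and $C$. (Pendant edge lengths to leaves are irrelevant with one sample per taxon.) Multispecies network coalescent: gene lineages are traced backward in time from the leaves; within each branch every pair of lineages present coalesces independently at rate 1 per coalescent unit for the branch's duration; when a lineage reaches a reticulation node it independently enters the incoming edge $b$ with probability equal to its inheritance probability; above the root all remaining lineages coalesce. $P(g)$ is the resulting probability of gene tree topology $g$. *)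

(* Defs.v *)
From Stdlib Require Import Reals List Arith Lra.
Import ListNotations.
Open Scope R_scope.

Inductive gtree : Type := Leaf (i : nat) | Node (l r : gtree).

Definition ta : gtree := Leaf 0.
Definition tb : gtree := Leaf 1.
Definition tc : gtree := Leaf 2.
Definition td : gtree := Leaf 3.

(** Cluster of a tree, encoded as a bitmask (leaf i |-> 2^i). *)
Fixpoint clus (t : gtree) : nat :=
  match t with Leaf i => 2 ^ i | Node l r => clus l + clus r end%nat.

Fixpoint ints (t : gtree) : list nat :=
  match t with Leaf _ => [] | Node l r => clus (Node l r) :: ints l ++ ints r end.

(** Two gene trees on {a,b,c,d} have the same rooted topology iff they have
    the same (multi)set of clusters. *)
Definition same_topology (t g : gtree) : bool :=
  forallb (fun c => Nat.eqb (count_occ Nat.eq_dec (ints t) c)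
                            (count_occ Nat.eq_dec (ints g) c)) (seq 0 16).

Definition dist (A : Type) := list (R * A).
Definition dret {A} (a : A) : dist A := [(1, a)].
Definition dbind {A B} (d : dist A) (f : A -> dist B) : dist B :=
  flat_map (fun pa => map (fun qb => (fst pa * fst qb, snd qb)) (f (snd pa))) d.

Definition sumR (l : list R) : R := fold_right Rplus 0 l.
Definition prodR (l : list R) : R := fold_right Rmult 1 l.

Fixpoint picks {A} (l : list A) : list (A * list A) :=
  match l with
  | [] => []
  | x :: r => (x, r) :: map (fun yr => (fst yr, x :: snd yr)) (picks r)
  end.

Fixpoint upairs {A} (l : list A) : list (A * A * list A) :=
  match l with
  | [] => []
  | x :: r => map (fun yr => (x, fst yr, snd yr)) (picks r)
              ++ map (fun p => (fst (fst p), snd (fst p), x :: snd p)) (upairs r)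
  end.

Definition coal1 (ls : list gtree) : dist (list gtree) :=
  let m := INR (length (upairs ls)) in
  map (fun p => (/ m, Node (fst (fst p)) (snd (fst p)) :: snd p)) (upairs ls).

Fixpoint coaln (k : nat) (ls : list gtree) : dist (list gtree) :=
  match k with O => dret ls | S k' => dbind (coal1 ls) (coaln k') end.

(** Total coalescence rate with i lineages (each pair at rate 1). *)
Definition lam (i : nat) : R := INR i * (INR i - 1) / 2.

(** Transition probability of the pure-death (lineage-counting) process with
    rates lam i from n lineages to k lineages (1 <= k <= n) in time t:
    standard formula for a pure death chain with distinct rates. *)
Definition trans (n k : nat) (t : R) : R :=
  prodR (map lam (seq (k + 1) (n - k))) *
  sumR (map (fun j => exp (- lam j * t) /
                prodR (map (fun i => lam i - lam j)
                   (filter (fun i => negb (Nat.eqb i j)) (seq k (n - k + 1)))))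
            (seq k (n - k + 1))).

(** Coalescent within a branch of length t: the number of lineages drops from
    n to k with probability trans n k t, and the n - k coalescences merge
    uniformly random pairs (jump chain of Kingman's coalescent). *)
Definition branch (t : R) (ls : list gtree) : dist (list gtree) :=
  let n := length ls in
  let k0 := Nat.min 1 n in
  flat_map (fun k => map (fun pl => (trans n k t * fst pl, snd pl))
                         (coaln (n - k) ls))
           (seq k0 (n - k0 + 1)).

(** Above the root all lineages coalesce. *)
Definition root_coal (ls : list gtree) : dist (list gtree) :=
  coaln (length ls - 1) ls.

(** At the reticulation node h each lineage independently goes to the
    parent p with probability gamma and to q with probability 1 - gamma. *)
Fixpoint splits (gamma : R) (ls : list gtree) : dist (list gtree * list gtree) :=
  match ls with
  | [] => dret ([], [])
  | t :: r => map (fun pq => (gamma * fst pq, (t :: fst (snd pq), snd (snd pq)))) (splits gamma r)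
           ++ map (fun pq => ((1 - gamma) * fst pq, (fst (snd pq), t :: snd (snd pq)))) (splits gamma r)
  end.

(** The MSNC on psi: branch (h,m) of length y with lineages b, c; the
    reticulation edges (p,h),(q,h) have length w = 0; branches (r,p) and
    (r,q) of length x carry a (resp. d) plus the lineages that went there;
    then all remaining lineages coalesce above the root r. *)
Definition psi_dist (x y gamma : R) : dist (list gtree) :=
  dbind (branch y [tb; tc]) (fun lh =>
  dbind (splits gamma lh) (fun pq =>
  dbind (branch x (ta :: fst pq)) (fun lp =>
  dbind (branch x (td :: snd pq)) (fun lq =>
  root_coal (lp ++ lq))))).

Definition gt_prob (x y gamma : R) (g : gtree) : R :=
  sumR (map fst (filter (fun pl => match snd pl with
                                   | [t] => same_topology t g
                                   | _ => false end) (psi_dist x y gamma))).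

Definition lim_infty (f : R -> R) (L : R) : Prop :=
  forall eps, eps > 0 -> exists M, forall x, x > M -> Rabs (f x - L) < eps.

(* Main.v *)
Require Import Defs.
From Stdlib Require Import Reals List Lra.
Import ListNotations.
Open Scope R_scope.

Lemma lim_const (c : R) : lim_infty (fun _ => c) c.
Proof. intros e He; exists 0; intros; rewrite Rminus_diag, Rabs_R0; lra. Qed.

Lemma lim_plus f g L M : lim_infty f L -> lim_infty g M ->
  lim_infty (fun x => f x + g x) (L + M).
Proof.
  intros Hf Hg e He.
  destruct (Hf (e/2)) as [M1 H1]; [lra|].
  destruct (Hg (e/2)) as [M2 H2]; [lra|].
  exists (Rmax M1 M2); intros x Hx.
  assert (x > M1) by (pose proof (Rmax_l M1 M2); lra).
  assert (x > M2) by (pose proof (Rmax_r M1 M2); lra).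
  specialize (H1 x H); specialize (H2 x H0).
  replace (f x + g x - (L + M)) with ((f x - L) + (g x - M)) by ring.
  pose proof (Rabs_triang (f x - L) (g x - M)); lra.
Qed.

Lemma lim_mult f g L M : lim_infty f L -> lim_infty g M ->
  lim_infty (fun x => f x * g x) (L * M).
Proof.
  intros Hf Hg e He.
  set (d := Rmin 1 (e / (Rabs L + Rabs M + 1))).
  assert (HA : 0 < Rabs L + Rabs M + 1) by (pose proof (Rabs_pos L); pose proof (Rabs_pos M); lra).
  assert (Hd : 0 < d).
  { unfold d; apply Rmin_glb_lt; [lra|]. apply Rdiv_lt_0_compat; lra. }
  destruct (Hf d Hd) as [M1 H1].
  destruct (Hg d Hd) as [M2 H2].
  exists (Rmax M1 M2); intros x Hx.
  assert (x > M1) by (pose proof (Rmax_l M1 M2); lra).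
  assert (x > M2) by (pose proof (Rmax_r M1 M2); lra).
  specialize (H1 x H); specialize (H2 x H0).
  replace (f x * g x - L * M) with ((f x - L) * (g x - M) + L * (g x - M) + (f x - L) * M) by ring.
  assert (d <= 1) by apply Rmin_l.
  assert (d * (Rabs L + Rabs M + 1) <= e).
  { assert (d <= e / (Rabs L + Rabs M + 1)) by apply Rmin_r.
    apply Rmult_le_compat_r with (r := Rabs L + Rabs M + 1) in H4; [|lra].
    unfold Rdiv in H4; rewrite Rmult_assoc, Rinv_l in H4; lra. }
  pose proof (Rabs_triang ((f x - L) * (g x - M) + L * (g x - M)) ((f x - L) * M)).
  pose proof (Rabs_triang ((f x - L) * (g x - M)) (L * (g x - M))).
  rewrite !Rabs_mult in *.
  pose proof (Rabs_pos L); pose proof (Rabs_pos M);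
  pose proof (Rabs_pos (f x - L)); pose proof (Rabs_pos (g x - M)).
  assert (Rabs (f x - L) * Rabs (g x - M) <= d * d) by (apply Rmult_le_compat; lra).
  assert (Rabs L * Rabs (g x - M) <= Rabs L * d) by (apply Rmult_le_compat_l; lra).
  assert (Rabs (f x - L) * Rabs M <= d * Rabs M) by (apply Rmult_le_compat_r; lra).
  assert (d * d <= d * 1) by (apply Rmult_le_compat_l; lra).
  assert (Rabs (f x - L) * Rabs M < d * Rabs M \/ Rabs (f x - L) * Rabs M <= d * Rabs M) by lra.
  assert (Rabs (f x - L) * Rabs (g x - M) < d * d).
  { apply Rle_lt_trans with (d * Rabs (g x - M)).
    - apply Rmult_le_compat_r; lra.
    - apply Rmult_lt_compat_l; lra. }
  nra.
Qed.

Lemma lim_exp c : 0 < c -> lim_infty (fun x => exp (- (c * x))) 0.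
Proof.
  intros Hc e He.
  exists (- ln e / c); intros x Hx.
  rewrite Rminus_0_r, Rabs_pos_eq by (left; apply exp_pos).
  rewrite <- (exp_ln e) by lra.
  apply exp_increasing.
  apply Rmult_gt_compat_l with (r := c) in Hx; [|lra].
  replace (c * (- ln e / c)) with (- ln e) in Hx by (field; lra). lra.
Qed.

Lemma lim_ext f g L : (forall x, f x = g x) -> lim_infty g L -> lim_infty f L.
Proof. intros E H e He; destruct (H e He) as [M HM]; exists M; intros; rewrite E; auto. Qed.

Lemma lim_eqL f L M : lim_infty f L -> L = M -> lim_infty f M.
Proof. intros; subst; auto. Qed.

Lemma lam1 : lam 1 = 0. Proof. unfold lam; simpl; lra. Qed.
Lemma lam2 : lam 2 = 1. Proof. unfold lam; simpl; lra. Qed.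
Lemma lam3 : lam 3 = 3. Proof. unfold lam; simpl; lra. Qed.

Ltac tr := unfold trans; simpl; rewrite ?lam1, ?lam2, ?lam3, ?Ropp_mult_distr_l_reverse, ?Rmult_0_l, ?Ropp_0, ?exp_0.

Lemma t11 x : trans 1 1 x = 1.
Proof. tr.  field. Qed.
Lemma t21 x : trans 2 1 x = 1 - exp (- (1 * x)).
Proof. tr. 
   field. Qed.
Lemma t22 x : trans 2 2 x = exp (- (1 * x)).
Proof. tr.  field. Qed.
Lemma t31 x : trans 3 1 x = 1 - 3/2 * exp (- (1 * x)) + 1/2 * exp (- (3 * x)).
Proof. tr. 
  
   field. Qed.
Lemma t32 x : trans 3 2 x = 3/2 * exp (- (1 * x)) - 3/2 * exp (- (3 * x)).
Proof. tr. 
  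
   field. Qed.
Lemma t33 x : trans 3 3 x = exp (- (3 * x)).
Proof. tr.  field. Qed.

Lemma lim_t11 : lim_infty (fun x => trans 1 1 x) 1.
Proof. apply lim_ext with (fun _ => 1); [apply t11| apply lim_const]. Qed.

Ltac lim_alg :=
  lazymatch goal with
  | |- lim_infty (fun x => @?a x + @?b x) _ => apply (lim_plus a b); lim_alg
  | |- lim_infty (fun x => @?a x - @?b x) _ =>
      apply (lim_ext _ (fun x => a x + (-1) * b x)); [intro; simpl; ring|];
      apply (lim_plus a); [lim_alg|apply (lim_mult (fun _ => -1) b); [apply lim_const|lim_alg]]
  | |- lim_infty (fun x => @?a x * @?b x) _ => apply (lim_mult a b); lim_alg
  | |- lim_infty (fun x => exp (- (?c * x))) _ => apply lim_exp; lra
  | |- lim_infty (fun _ => ?c) _ => apply lim_const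
  | |- lim_infty (fun x => trans 1 1 x) _ => apply lim_t11
  end.

Lemma lim_t21 : lim_infty (fun x => trans 2 1 x) 1.
Proof. eapply lim_eqL; [apply lim_ext with (1 := t21); lim_alg | ring]. Qed.
Lemma lim_t22 : lim_infty (fun x => trans 2 2 x) 0.
Proof. eapply lim_eqL; [apply lim_ext with (1 := t22); lim_alg | ring]. Qed.
Lemma lim_t31 : lim_infty (fun x => trans 3 1 x) 1.
Proof. eapply lim_eqL; [apply lim_ext with (1 := t31); lim_alg | ring]. Qed.
Lemma lim_t32 : lim_infty (fun x => trans 3 2 x) 0.
Proof. eapply lim_eqL; [apply lim_ext with (1 := t32); lim_alg | ring]. Qed.
Lemma lim_t33 : lim_infty (fun x => trans 3 3 x) 0.
Proof. eapply lim_eqL; [apply lim_ext with (1 := t33); lim_alg | ring]. Qed.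

Ltac lim_alg2 :=
  lazymatch goal with
  | |- lim_infty (fun x => @?a x + @?b x) _ => apply (lim_plus a b); lim_alg2
  | |- lim_infty (fun x => @?a x * @?b x) _ => apply (lim_mult a b); lim_alg2
  | |- lim_infty (fun _ => ?c) _ => apply lim_const
  | |- lim_infty (fun x => trans 1 1 x) _ => apply lim_t11
  | |- lim_infty (fun x => trans 2 1 x) _ => apply lim_t21
  | |- lim_infty (fun x => trans 2 2 x) _ => apply lim_t22
  | |- lim_infty (fun x => trans 3 1 x) _ => apply lim_t31
  | |- lim_infty (fun x => trans 3 2 x) _ => apply lim_t32
  | |- lim_infty (fun x => trans 3 3 x) _ => apply lim_t33
  end.

Lemma ty21 y : trans 2 1 y = 1 - exp (- y).
Proof. rewrite t21; f_equal; f_equal; f_equal; ring. Qed.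
Lemma ty22 y : trans 2 2 y = exp (- y).
Proof. rewrite t22; f_equal; f_equal; ring. Qed.

Ltac solve_one :=
  eapply lim_eqL;
  [ cbv -[lim_infty trans exp INR Rplus Rmult Rinv Ropp Rminus Rdiv IZR]; lim_alg2
  | rewrite ?ty21, ?ty22; simpl INR; field ].

Theorem mainTheorem2 (y gamma : R) (hy : 0 < y) (hg0 : 0 <= gamma) (hg1 : gamma <= 1) :
  let P := fun g => (fun x => gt_prob x y gamma g) in
  lim_infty (P (Node (Node (Node tb tc) ta) td)) (gamma - (gamma - gamma ^ 2 / 3) * exp (- y)) /\
  lim_infty (P (Node (Node (Node tb tc) td) ta))
            ((1 - gamma) - (2 / 3 - gamma / 3 - gamma ^ 2 / 3) * exp (- y)) /\
  lim_infty (P (Node (Node ta tb) (Node tc td))) (gamma * (1 - gamma) * exp (- y)) /\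
  lim_infty (P (Node (Node ta tc) (Node tb td))) (gamma * (1 - gamma) * exp (- y)) /\
  lim_infty (P (Node (Node (Node ta tb) tc) td)) (gamma ^ 2 / 3 * exp (- y)) /\
  lim_infty (P (Node (Node (Node ta tc) tb) td)) (gamma ^ 2 / 3 * exp (- y)) /\
  lim_infty (P (Node ta (Node tb (Node tc td)))) ((1 - gamma) ^ 2 / 3 * exp (- y)) /\
  lim_infty (P (Node (Node (Node tb td) tc) ta)) ((1 - gamma) ^ 2 / 3 * exp (- y)) /\
  lim_infty (P (Node (Node ta td) (Node tb tc))) 0 /\
  lim_infty (P (Node (Node (Node ta tb) td) tc)) 0 /\
  lim_infty (P (Node tb (Node ta (Node tc td)))) 0 /\
  lim_infty (P (Node (Node (Node ta td) tb) tc)) 0 /\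
  lim_infty (P (Node (Node (Node tb td) ta) tc)) 0 /\
  lim_infty (P (Node (Node (Node ta tc) td) tb)) 0 /\
  lim_infty (P (Node (Node (Node ta td) tc) tb)) 0.
Proof.
  intro P; unfold P.
  repeat split; solve_one.
Qed.
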